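(* Let $K$ be a field, $A\subset K$ a finite set with $|A|=m$, $0\le p\le m$, and $X=\{x_1,\dots,x_r\}$ a set of indeterminates with $r\le m-p$. Let $B\subset K$ be any finite set with $|B|\ge p$. Then in $K[X]$, $$\sum_{A'\subset A,\ |A'|=p}\mathcal{R}(A\setminus A',B)\frac{\mathcal{R}(X,A')}{\mathcal{R}(A\setminus A',A')}=\sum_{B'\subset B,\ |B'|=p}\mathcal{R}(A,B\setminus B')\frac{\mathcal{R}(X,B')}{\mathcal{R}(B',B\setminus B')}.$$
   Context: For finite sets $Y,Z$ of elements or indeterminates, $\mathcal{R}(Y,Z):=\prod_{y\in Y,z\in Z}(y-z)$, with $\mathcal{R}(Y,Z)=1$ if $Y$ or $Z$ is empty (in particular when $r=0$). *)

(* Defs.v *)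
From mathcomp Require Import all_boot all_algebra.
From mathcomp Require Import finmap.
From mathcomp Require Import mpoly.
Set Implicit Arguments. Unset Strict Implicit. Unset Printing Implicit Defensive.
Import GRing.Theory.
Local Open Scope ring_scope.
Local Open Scope fset_scope.

Definition Rc (K : fieldType) (Y Z : {fset K}) : K :=
  \prod_(y <- Y) \prod_(z <- Z) (y - z).

Definition RX (K : fieldType) (r : nat) (Z : {fset K}) : {mpoly K[r]} :=
  \prod_(i < r) \prod_(z <- Z) ('X_i - z%:MP).

(* Main.v *)
Require Import Defs.
From mathcomp Require Import all_boot all_algebra.
From mathcomp Require Import finmap.
From mathcomp Require Import mpoly.
From mathcomp Require Import ring.
From mathcomp Require Import zify.
Set Implicit Arguments. Unset Strict Implicit. Unset Printing Implicit Defensive.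
Import GRing.Theory.
Local Open Scope ring_scope.
Local Open Scope fset_scope.
Local Open Scope ring_scope.

Section Split.
Variables (K : choiceType) (L : nmodType).

Lemma fsub_U1_notin (a : K) (A0 x : {fset K}) : a \notin A0 ->
  (x `<=` a |` A0) && (a \notin x) = (x `<=` A0).
Proof.
move=> aA0; apply/idP/idP.
  case/andP=> /fsubsetP sx ax; apply/fsubsetP=> y yx.
  have := sx y yx; rewrite !inE; case/orP=> // /eqP ya.
  by move: ax; rewrite -ya yx.
move=> /fsubsetP sx; apply/andP; split.
  by apply/fsubsetP=> y /sx yA; rewrite !inE yA orbT.
by apply/negP=> /sx; rewrite (negbTE aA0).
Qed.

Lemma split_sum (a : K) (A0 : {fset K}) (P : pred {fset K}) (G : {fset K} -> L) :
  a \notin A0 ->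
  \sum_(S <- fpowerset (a |` A0) | P S) G S =
  \sum_(S <- fpowerset A0 | P S) G S + \sum_(S <- fpowerset A0 | P (a |` S)) G (a |` S).
Proof.
move=> aA0.
rewrite (big_fsetIDcond _ (fun S : {fset K} => a \in S)) addrC; congr (_ + _).
  2: apply: eq_fbigl_cond => x; rewrite !inE /= !fpowersetE -andbA.
  2: by rewrite andbA fsub_U1_notin.
rewrite [RHS]big_mkcond /=.
have inj : {in fpowerset A0 &, injective (fun S => a |` S)}.
  move=> S1 S2; rewrite !fpowersetE => /fsubsetP s1 /fsubsetP s2 e.
  apply/fsetP=> y; case: (y =P a) => [->|/eqP ya].
    by apply/idP/idP => [/s1|/s2]; rewrite (negbTE aA0).
  have := congr1 (fun X => y \in X) e; rewrite /= !inE (negbTE ya) //.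
rewrite -(big_imfset _ imfset_key (fun T => if P T then G T else 0) inj) /=.
rewrite -big_mkcond /=.
apply: eq_fbigl_cond => x; rewrite !inE /= !fpowersetE.
congr (_ && _); apply/idP/idP; last first.
  case/imfsetP=> S /=; rewrite fpowersetE => sA0 ->.
  rewrite fsetU11 andbT; apply/fsubsetP => y; rewrite !inE.
  case/orP=> [->//|/(fsubsetP sA0) ->]; by rewrite orbT.
case/andP=> sx ax; apply/imfsetP; exists (x `\ a) => /=.
  rewrite fpowersetE; apply/fsubsetP => y; rewrite !inE; case/andP=> ya yx.
  by have := fsubsetP sx y yx; rewrite !inE (negbTE ya).
by rewrite fsetD1K.
Qed.
End Split.
Section RcLemmas.
Variable K : fieldType.
Implicit Types (Y Z C : {fset K}) (a : K).

Lemma prod_fsetD (R : comNzRingType) (g : K -> R) C Y : C `<=` Y ->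
  \prod_(y <- Y) g y = \prod_(y <- Y `\` C) g y * \prod_(y <- C) g y.
Proof.
move=> sCY; rewrite (big_fsetID _ (mem C)) /= mulrC; congr (_ * _).
  by apply: eq_fbigl => x; rewrite !inE /= andbC.
apply: eq_fbigl => x; rewrite !inE /=; apply/andP/idP => [[]//|xC].
by split=> //; apply: (fsubsetP sCY).
Qed.

Lemma prod_opp (R : comNzRingType) (g : K -> R) a Y :
  \prod_(y <- Y) (g a - g y) = (-1) ^+ #|`Y| * \prod_(y <- Y) (g y - g a).
Proof.
rewrite !big_seq_fsetE /=.
under eq_bigr do rewrite -opprB.
rewrite (prodrN (mem predT)) cardfE cardT -cardE.
by [].
Qed.

Lemma prod_oppK a Y :
  \prod_(y <- Y) (a - y) = (-1) ^+ #|`Y| * \prod_(y <- Y) (y - a).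
Proof. exact: (@prod_opp K id). Qed.

Lemma RcU1l a Y Z : a \notin Y -> Rc (a |` Y) Z = (\prod_(z <- Z) (a - z)) * Rc Y Z.
Proof. by move=> aY; rewrite /Rc big_fsetU1. Qed.

Lemma RcU1r a Y Z : a \notin Z -> Rc Y (a |` Z) = (\prod_(y <- Y) (y - a)) * Rc Y Z.
Proof.
move=> aZ; rewrite /Rc -big_split /=; apply: eq_bigr => y _.
by rewrite big_fsetU1.
Qed.

Lemma Rc0l Z : Rc fset0 Z = 1.
Proof. by rewrite /Rc big_seq_fset0. Qed.

Lemma Rc0r Y : Rc Y fset0 = 1.
Proof. by rewrite /Rc big1 // => y _; rewrite big_seq_fset0. Qed.

Lemma Rc_eq0 a Y Z : a \in Y -> a \in Z -> Rc Y Z = 0.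
Proof.
move=> aY aZ; rewrite /Rc (big_fsetD1 a aY) /= (big_fsetD1 a aZ) /=.
by rewrite subrr !mul0r.
Qed.

Lemma Rc_neq0 Y Z : (forall y, y \in Y -> y \notin Z) -> Rc Y Z != 0.
Proof.
move=> dis; rewrite /Rc prodf_seq_neq0; apply/allP => y yY /=.
rewrite prodf_seq_neq0; apply/allP => z zZ /=; rewrite subr_eq0.
by apply: contraNneq (dis y yY) => ->.
Qed.

Lemma prod_neq0 a Y : a \notin Y -> \prod_(y <- Y) (a - y) != 0.
Proof.
move=> aY; rewrite prodf_seq_neq0; apply/allP => y yY /=; rewrite subr_eq0.
by apply: contraNneq aY => ->.
Qed.

Lemma prod_neq0r a Y : a \notin Y -> \prod_(y <- Y) (y - a) != 0.
Proof.
move=> aY; rewrite prodf_seq_neq0; apply/allP => y yY /=; rewrite subr_eq0.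
by apply: contraNneq aY => <-.
Qed.

Lemma fsetU1D a Y C : a \notin Y -> (a |` Y) `\` (a |` C) = Y `\` C.
Proof.
move=> aY; apply/fsetP => x; rewrite !inE.
case: (x =P a) => [->|_]; rewrite ?eqxx ?(negbTE aY) /= ?andbF ?andbT //.
Qed.

Lemma fsetU1D' a Y C : a \notin C -> (a |` Y) `\` C = a |` (Y `\` C).
Proof.
move=> aC; apply/fsetP => x; rewrite !inE.
by case: (x =P a) => [->|_] //=; rewrite aC.
Qed.

Lemma notin_sub a Y C : a \notin Y -> C `<=` Y -> a \notin C.
Proof. by move=> aY sCY; apply: contra aY => /(fsubsetP sCY). Qed.

Lemma notin_D a Y C : a \notin Y -> a \notin Y `\` C.
Proof. by move=> aY; rewrite !inE (negbTE aY) andbF. Qed.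

Lemma cardU1_notin a C : a \notin C -> #|`a |` C| = (#|`C|).+1.
Proof. by move=> aC; rewrite cardfsU1 aC. Qed.

End RcLemmas.
Section Main.
Variables (K : fieldType) (L : idomainType) (phi : {rmorphism K -> L}) (q : K -> L).

Definition Qs (S : {fset K}) : L := \prod_(s <- S) q s.

Definition Tsum p (A B : {fset K}) : L :=
  \sum_(S <- fpowerset A | #|`S| == p)
     phi (Rc (A `\` S) B / Rc (A `\` S) S) * Qs S.

Definition Usum p (A B : {fset K}) : L :=
  \sum_(S <- fpowerset B | #|`S| == p)
     phi (Rc A (B `\` S) / Rc S (B `\` S)) * Qs S.

Lemma QsU1 a S : a \notin S -> Qs (a |` S) = q a * Qs S.
Proof. by move=> aS; rewrite /Qs big_fsetU1. Qed.

Lemma mulKdiv (x y z : K) : x != 0 -> (x * y) / (x * z) = y / z.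
Proof. by move=> x0; rewrite invfM mulrACA mulfV // mul1r. Qed.

Lemma split_card a A0 (G : {fset K} -> L) p : a \notin A0 ->
  \sum_(S <- fpowerset (a |` A0) | #|`S| == p.+1) G S =
  \sum_(S <- fpowerset A0 | #|`S| == p.+1) G S +
  \sum_(S <- fpowerset A0 | #|`S| == p) G (a |` S).
Proof.
move=> aA0; rewrite split_sum //; congr (_ + _).
rewrite big_seq_cond [RHS]big_seq_cond; apply: eq_bigl => S.
case SA: (S \in fpowerset A0) => //=.
move: SA; rewrite fpowersetE => SA.
by rewrite cardU1_notin ?eqSS // (notin_sub aA0 SA).
Qed.

Lemma Tsum_overlap p c A B : c \in A -> c \in B ->
  Tsum p.+1 A B = q c * Tsum p (A `\ c) (B `\ c).
Proof.
move=> cA cB; rewrite /Tsum.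
set A1 := A `\ c; set B1 := B `\ c.
have cA1 : c \notin A1 by rewrite !inE eqxx.
have cB1 : c \notin B1 by rewrite !inE eqxx.
have eA : A = c |` A1 by rewrite fsetD1K.
have eB : B = c |` B1 by rewrite fsetD1K.
rewrite [in fpowerset A]eA split_card // big1_fset ?add0r; last first.
  move=> S; rewrite fpowersetE => SA1 _.
  rewrite (@Rc_eq0 _ c _ B) ?mul0r ?rmorph0 ?mul0r //.
  by rewrite !inE cA (notin_sub cA1 SA1).
rewrite mulr_sumr; apply: eq_fbigr => S; rewrite fpowersetE => SA1 _.
have cS := notin_sub cA1 SA1.
rewrite eA (@fsetU1D _ c A1 S cA1) eB RcU1r // RcU1r ?(notin_sub cA1 SA1) // QsU1 //.
have cA1S : c \notin A1 `\` S by rewrite !inE eqxx /= !andbF.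
by rewrite mulKdiv ?(prod_neq0r cA1S) // mulrCA.
Qed.

Lemma Usum_overlap p c A B : c \in A -> c \in B ->
  Usum p.+1 A B = q c * Usum p (A `\ c) (B `\ c).
Proof.
move=> cA cB; rewrite /Usum.
set A1 := A `\ c; set B1 := B `\ c.
have cA1 : c \notin A1 by rewrite !inE eqxx.
have cB1 : c \notin B1 by rewrite !inE eqxx.
have eA : A = c |` A1 by rewrite fsetD1K.
have eB : B = c |` B1 by rewrite fsetD1K.
rewrite [in fpowerset B]eB split_card // big1_fset ?add0r; last first.
  move=> S; rewrite fpowersetE => SB1 _.
  rewrite (@Rc_eq0 _ c A) ?mul0r ?rmorph0 ?mul0r //.
  by rewrite !inE cB (notin_sub cB1 SB1).
rewrite mulr_sumr; apply: eq_fbigr => S; rewrite fpowersetE => SB1 _.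
have cS := notin_sub cB1 SB1.
have cB1S : c \notin B1 `\` S by rewrite !inE eqxx /= !andbF.
rewrite eB (@fsetU1D _ c B1 S cB1) eA RcU1l // RcU1l // QsU1 //.
by rewrite mulKdiv ?(prod_neq0 cB1S) // mulrCA.
Qed.

Lemma sum_card0 (G : {fset K} -> L) A :
  \sum_(S <- fpowerset A | #|`S| == 0%N) G S = G fset0.
Proof.
rewrite big_fset_condE (_ : [fset _ in _ | _] = [fset fset0]) ?big_seq_fset1 //.
apply/fsetP => S; rewrite !inE /= fpowersetE cardfs_eq0.
by case: eqP => [->|] //=; rewrite ?andbT ?andbF ?fsub0set.
Qed.

Lemma Tsum0 A B : Tsum 0 A B = phi (Rc A B).
Proof. by rewrite /Tsum sum_card0 fsetD0 Rc0r divr1 /Qs big_seq_fset0 mulr1. Qed.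

Lemma Usum0 A B : Usum 0 A B = phi (Rc A B).
Proof. by rewrite /Usum sum_card0 fsetD0 Rc0l divr1 /Qs big_seq_fset0 mulr1. Qed.

Definition lin (Z : {fset K}) : {poly L} := \prod_(z <- Z) (('X : {poly L}) - (phi z)%:P).

Lemma lin_eval Z x : (lin Z).[phi x] = phi (\prod_(z <- Z) (x - z)).
Proof.
rewrite /lin horner_prod rmorph_prod; apply: eq_bigr => z _.
by rewrite hornerXsubC rmorphB.
Qed.

Lemma size_lin Z : size (lin Z) = (#|`Z|).+1.
Proof. by rewrite /lin size_prod_XsubC. Qed.

Lemma prod_root (x : K) (Z : {fset K}) : x \in Z -> \prod_(z <- Z) (x - z) = 0.
Proof. by move=> xZ; rewrite (big_fsetD1 x xZ) /= subrr mul0r. Qed.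


Section WithF.
Variable F : {poly L}.
Hypothesis HF : forall c, F.[phi c] = q c.

Definition D1 A0 B p : {poly L} :=
  \sum_(S <- fpowerset A0 | #|`S| == p.+1)
    (phi (Rc (A0 `\` S) B / Rc (A0 `\` S) S) * Qs S) *: (lin B * lin (A0 `\` S)).
Definition D2 A0 B p : {poly L} :=
  \sum_(C <- fpowerset A0 | #|`C| == p)
    (phi ((-1) ^+ (#|`A0| - p) * (Rc (A0 `\` C) B / Rc (A0 `\` C) C)) * Qs C)
      *: (lin C * F).
Definition D3 A0 B p : {poly L} :=
  \sum_(S <- fpowerset B | #|`S| == p.+1)
    (phi (Rc A0 (B `\` S) / Rc S (B `\` S)) * Qs S) *: (lin (B `\` S) * lin A0).
Definition Dp A0 B p := D1 A0 B p + D2 A0 B p - D3 A0 B p.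

Lemma disjD (Y C : {fset K}) y : y \in Y `\` C -> y \notin C.
Proof. by rewrite !inE => /andP[]. Qed.

Lemma D_at_a a A0 B p : a \notin A0 ->
  (Dp A0 B p).[phi a] =
  phi (\prod_(c <- A0) (a - c)) * (Tsum p.+1 (a |` A0) B - Usum p.+1 (a |` A0) B).
Proof.
move=> aA0.
rewrite /Dp /D1 /D2 /D3 !hornerD hornerN !horner_sum /Tsum /Usum split_card // mulrBr mulrDr !mulr_sumr.
congr (_ + _ - _).
- apply: eq_fbigr => S; rewrite fpowersetE => SA0 _.
  have aS := notin_sub aA0 SA0.
  rewrite hornerZ hornerM !lin_eval (@fsetU1D' _ a A0 S aS).
  rewrite (prod_fsetD _ SA0) RcU1l ?notin_D // RcU1l ?notin_D //.
  set W := \prod_(y <- A0 `\` S) (a - y). set Ps := \prod_(y <- S) (a - y).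
  set PB := \prod_(z <- B) (a - z). set Rb := Rc (A0 `\` S) B.
  set Rs := Rc (A0 `\` S) S.
  have Ps0 : Ps != 0 := prod_neq0 aS.
  have Rs0 : Rs != 0 by apply: Rc_neq0 => y /disjD.
  have E : W * Ps * (PB * Rb / (Ps * Rs)) = Rb / Rs * (PB * W) by field; rewrite ?Ps0 ?Rs0 ?P'0.
  by rewrite [in RHS]mulrA -[in RHS]rmorphM E; ring.
- apply: eq_fbigr => C; rewrite fpowersetE => CA0 /eqP cC.
  have aC := notin_sub aA0 CA0.
  rewrite hornerZ hornerM lin_eval HF (@fsetU1D _ a A0 C aA0).
  rewrite RcU1r // QsU1 // (prod_fsetD _ CA0) (prod_oppK a (A0 `\` C)) (cardfsDS CA0) cC.
  set s := (-1) ^+ (#|`A0| - p) : K.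
  set P' := \prod_(y <- A0 `\` C) (y - a). set V := \prod_(y <- C) (a - y).
  set Rb := Rc (A0 `\` C) B. set Rs := Rc (A0 `\` C) C.
  have P'0 : P' != 0 by apply: prod_neq0r; apply: notin_D.
  have Rs0 : Rs != 0 by apply: Rc_neq0 => y /disjD.
  have E : s * P' * V * (Rb / (P' * Rs)) = s * (Rb / Rs) * V by field; rewrite ?Ps0 ?Rs0 ?P'0.
  rewrite (_ : phi (s * P' * V) * (phi (Rb / (P' * Rs)) * (q a * Qs C)) =
     phi (s * P' * V * (Rb / (P' * Rs))) * (q a * Qs C)); last by ring.
  by rewrite E; ring.
- apply: eq_fbigr => S; rewrite fpowersetE => SB _.
  by rewrite hornerZ hornerM !lin_eval RcU1l //; ring.
Qed.

Lemma D_at_c c A0 B p : c \in A0 -> (Dp A0 B p).[phi c] = 0.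
Proof.
move=> cA0.
set A1 := A0 `\ c.
have cA1 : c \notin A1 by rewrite !inE eqxx.
have eA : A0 = c |` A1 by rewrite fsetD1K.
rewrite /Dp /D1 /D2 /D3 !hornerD hornerN !horner_sum.
rewrite [X in _ - X]big1_fset ?subr0; last first.
  by move=> S _ _; rewrite hornerZ hornerM !lin_eval (prod_root cA0) rmorph0 !mulr0.
rewrite [in fpowerset A0]eA split_card // big1_fset ?add0r; last first.
  move=> S; rewrite fpowersetE => SA1 _.
  have cS := notin_sub cA1 SA1.
  rewrite hornerZ hornerM !lin_eval (@prod_root c (A0 `\` S)) ?rmorph0 ?mulr0 //.
  by rewrite !inE cS cA0.
rewrite split_sum // [X in _ + (_ + X)]big1_fset ?addr0; last first.
  move=> S _ _.
  by rewrite hornerZ hornerM !lin_eval (@prod_root c (c |` S)) ?fsetU11 // rmorph0 mul0r mulr0.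
rewrite -big_split /=; apply: big1_fset => C; rewrite fpowersetE => CA1 /eqP cC.
have cC' := notin_sub cA1 CA1.
have pA1 : (p <= #|`A1|)%N by rewrite -cC fsubset_leq_card.
have cA1C : c \notin A1 `\` C by apply: notin_D.
rewrite !hornerZ !hornerM !lin_eval HF.
rewrite eA (@fsetU1D _ c A1 C cA1) (@fsetU1D' _ c A1 C cC') cardU1_notin //.
rewrite RcU1r // RcU1l // RcU1l // QsU1 //.
rewrite (prod_oppK c (A1 `\` C)) (cardfsDS CA1) cC subSn //.
set s := (-1) ^+ (#|`A1| - p) : K.
set P' := \prod_(y <- A1 `\` C) (y - c). set V := \prod_(y <- C) (c - y).
set PB := \prod_(z <- B) (c - z).
set Rb := Rc (A1 `\` C) B. set Rs := Rc (A1 `\` C) C.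
have P'0 : P' != 0 by apply: prod_neq0r.
have V0 : V != 0 by apply: prod_neq0.
have Rs0 : Rs != 0 by apply: Rc_neq0 => y /disjD.
have E1 : Rb / (P' * Rs) * (PB * (s * P')) = s * PB * (Rb / Rs)
  by field; rewrite ?P'0 ?Rs0 ?V0.
have E2 : (-1) ^+ (#|`A1| - p).+1 * (PB * Rb / (V * Rs)) * V = - (s * PB * (Rb / Rs))
  by rewrite exprS -/s; field; rewrite ?P'0 ?Rs0 ?V0.
rewrite (_ : phi (Rb / (P' * Rs)) * (q c * Qs C) * (phi PB * phi (s * P')) =
     phi (Rb / (P' * Rs) * (PB * (s * P'))) * (q c * Qs C)); last by ring.
rewrite (_ : phi ((-1) ^+ (#|`A1| - p).+1 * (PB * Rb / (V * Rs))) * Qs C * (phi V * q c) =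
     phi ((-1) ^+ (#|`A1| - p).+1 * (PB * Rb / (V * Rs)) * V) * (q c * Qs C)); last by ring.
by rewrite E1 E2 rmorphN mulNr addrN.
Qed.

Lemma D_at_b b A0 B p : b \in B ->
  (Dp A0 B p).[phi b] = phi ((-1) ^+ #|`A0| * \prod_(y <- A0) (y - b)) * q b *
     (Tsum p A0 (B `\ b) - Usum p A0 (B `\ b)).
Proof.
move=> bB.
set B1 := B `\ b.
have bB1 : b \notin B1 by rewrite !inE eqxx.
have eB : B = b |` B1 by rewrite fsetD1K.
rewrite /Dp /D1 /D2 /D3 !hornerD hornerN !horner_sum.
rewrite [X in X + _ - _]big1_fset ?add0r; last first.
  by move=> S _ _; rewrite hornerZ hornerM !lin_eval (prod_root bB) rmorph0 !mul0r mulr0.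
rewrite /Tsum /Usum mulrBr !mulr_sumr; congr (_ - _).
  apply: eq_fbigr => C; rewrite fpowersetE => CA0 /eqP cC.
  have pA0 : (p <= #|`A0|)%N by rewrite -cC fsubset_leq_card.
  rewrite hornerZ hornerM lin_eval HF.
  rewrite [in Rc _ B]eB RcU1r // (prod_fsetD _ CA0) (prod_oppK b C) cC.
  have -> : (-1) ^+ #|`A0| = (-1) ^+ (#|`A0| - p) * (-1) ^+ p :> K by rewrite -exprD subnK.
  set s := (-1) ^+ (#|`A0| - p) : K. set t := (-1) ^+ p : K.
  set P' := \prod_(y <- A0 `\` C) (y - b). set V := \prod_(y <- C) (y - b).
  set Rb := Rc (A0 `\` C) B1. set Rs := Rc (A0 `\` C) C.
  rewrite (_ : phi (s * (P' * Rb / Rs)) * Qs C * (phi (t * V) * q b) =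
     phi (s * (P' * Rb / Rs) * (t * V)) * (q b * Qs C)); last by ring.
  rewrite (_ : s * (P' * Rb / Rs) * (t * V) = s * t * (P' * V) * (Rb / Rs)); last by ring.
  by ring.
rewrite [in fpowerset B]eB split_card // big1_fset ?add0r; last first.
  move=> S; rewrite fpowersetE => SB1 _.
  have bS := notin_sub bB1 SB1.
  rewrite hornerZ hornerM !lin_eval (@prod_root b (B `\` S)) ?rmorph0 ?mul0r ?mulr0 //.
  by rewrite !inE bS bB.
apply: eq_fbigr => C; rewrite fpowersetE => CB1 /eqP cC.
have bC := notin_sub bB1 CB1.
have bB1C : b \notin B1 `\` C by apply: notin_D.
rewrite hornerZ hornerM !lin_eval eB (@fsetU1D _ b B1 C bB1) RcU1l // QsU1 //.
rewrite (prod_oppK b A0).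
set Y := \prod_(z <- B1 `\` C) (b - z).
set Ra := Rc A0 (B1 `\` C). set Rs := Rc C (B1 `\` C).
set u := (-1) ^+ #|`A0| : K. set rho := \prod_(y <- A0) (y - b).
have Y0 : Y != 0 by apply: prod_neq0.
have Rs0 : Rs != 0 by apply: Rc_neq0 => y yC; rewrite !inE yC.
have E : Ra / (Y * Rs) * Y = Ra / Rs by field; rewrite ?Y0 ?Rs0.
rewrite (_ : phi (Ra / (Y * Rs)) * (q b * Qs C) * (phi Y * phi (u * rho)) =
     phi (Ra / (Y * Rs) * Y) * phi (u * rho) * (q b * Qs C)); last by ring.
by rewrite E; ring.
Qed.

Lemma size_sum_le (I : eqType) (r : seq I) (P : pred I) (G : I -> {poly L}) N :
  (forall i, i \in r -> P i -> (size (G i) <= N)%N) ->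
  (size (\sum_(i <- r | P i) G i)%R <= N)%N.
Proof.
move=> H; rewrite big_seq_cond; apply: (big_ind (fun x : {poly L} => (size x <= N)%N)).
- by rewrite size_poly0.
- by move=> x y hx hy; apply: leq_trans (size_add _ _) _; rewrite geq_max hx hy.
- by move=> i /andP[ir Pi]; apply: H.
Qed.

Lemma size_mul_lin Z (G : {poly L}) N : (#|`Z| + size G <= N)%N -> (size (lin Z * G)%R <= N)%N.
Proof.
move=> h; apply: leq_trans (size_mul_leq _ _) _; rewrite size_lin /=.
exact: h.
Qed.

Lemma size_D A0 B p : (p.+1 <= #|`B|)%N -> (size F <= (#|`A0| - p).+1)%N ->
  (size (Dp A0 B p) <= #|`A0| + #|`B| - p)%N.
Proof.
move=> hB hF; rewrite /Dp /D1 /D2 /D3.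
apply: leq_trans (size_add _ _) _; rewrite size_opp geq_max; apply/andP; split; last first.
  apply: size_sum_le => S; rewrite fpowersetE => SB /eqP cS.
  apply: leq_trans (size_scale_leq _ _) _; apply: size_mul_lin.
  rewrite size_lin (cardfsDS SB) cS. lia.
apply: leq_trans (size_add _ _) _; rewrite geq_max; apply/andP; split.
  apply: size_sum_le => S; rewrite fpowersetE => SA0 /eqP cS.
  have := fsubset_leq_card SA0; rewrite cS => h.
  apply: leq_trans (size_scale_leq _ _) _; apply: size_mul_lin.
  rewrite size_lin (cardfsDS SA0) cS. lia.
apply: size_sum_le => C; rewrite fpowersetE => CA0 /eqP cC.
have := fsubset_leq_card CA0; rewrite cC => h.
apply: leq_trans (size_scale_leq _ _) _; apply: size_mul_lin.
rewrite cC. lia.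
Qed.

Lemma main p : forall A B : {fset K}, (p <= #|`A|)%N -> (p <= #|`B|)%N ->
  (size F <= (#|`A| - p).+1)%N -> Tsum p A B = Usum p A B.
Proof.
elim: p => [|p IH] A B hA hB hF; first by rewrite Tsum0 Usum0.
case: (boolP (has (fun c => c \in B) A)) => [/hasP [c cA cB] | /hasPn dis].
  rewrite (Tsum_overlap _ cA cB) (Usum_overlap _ cA cB); congr (_ * _).
  have ea := cardfsD1 c A; have eb := cardfsD1 c B; rewrite cA add1n in ea; rewrite cB add1n in eb.
  apply: IH; lia.
have : A != fset0 by rewrite -cardfs_gt0; lia.
case/fset0Pn => a aA.
set A0 := A `\ a.
have aA0 : a \notin A0 by rewrite !inE eqxx.
have eA : A = a |` A0 by rewrite fsetD1K.
have cardA : #|`A| = (#|`A0|).+1 by rewrite (cardfsD1 a A) aA.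
have hF' : (size F <= (#|`A0| - p).+1)%N by rewrite cardA subSS in hF.
have hA' : (p <= #|`A0|)%N by rewrite cardA in hA.
have D0 : Dp A0 B p = 0.
  apply/eqP; apply: contraT => nz.
  have roots : all (root (Dp A0 B p)) [seq phi x | x <- A0 `|` B].
    apply/allP => y /mapP [x xU ->]; rewrite /root.
    move: xU; rewrite inE; case/orP => xin.
      by rewrite D_at_c.
    rewrite D_at_b // IH ?subrr ?mulr0 //.
    have e := cardfsD1 x B; rewrite xin add1n in e; by rewrite -ltnS -e.
  have uq : uniq [seq phi x | x <- A0 `|` B].
    by rewrite (map_inj_uniq (fmorph_inj phi)) fset_uniq.
  have := max_poly_roots nz roots uq; rewrite size_map.
  have I0 : A0 `&` B = fset0.
    apply/fsetP => x; rewrite !inE; apply/negP => /andP [/andP [_ xA] xB].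
    by move: (dis x xA); rewrite xB.
  have := size_D hB hF'.
  rewrite -/(size (enum_fset (A0 `|` B))) -/(#|` A0 `|` B|) cardfsU I0 cardfs0 subn0.
  by move=> h1 /leq_trans/(_ h1); rewrite ltnNge leq_subr.
have := D_at_a B p aA0; rewrite D0 horner0 => /esym /eqP.
rewrite mulf_eq0 fmorph_eq0 (negbTE (prod_neq0 aA0)) /= subr_eq0 => /eqP.
by rewrite -eA.
Qed.

End WithF.
End Main.

Section Final.
Variables (K : fieldType) (r : nat).

Definition qX (c : K) : {mpoly K[r]} := \prod_(i < r) ('X_i - c%:MP).
Definition FX : {poly {mpoly K[r]}} := \prod_(i < r) (('X_i)%:P - 'X).

Lemma FX_eval c : FX.[mpolyC r c] = qX c.
Proof.
rewrite /FX horner_prod; apply: eq_bigr => i _.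
by rewrite hornerD hornerN hornerC hornerX.
Qed.

Lemma size_FX : size FX = r.+1.
Proof.
rewrite /FX size_prod; last first.
  by move=> i _; rewrite -opprB oppr_eq0 -size_poly_eq0 size_XsubC.
under eq_bigr do rewrite -opprB size_opp size_XsubC.
by rewrite sum_nat_const card_ord muln2 -addnn -addnS addKn.
Qed.

End Final.

Local Open Scope fset_scope.

Theorem corollary3p2 (K : fieldType) (A B : {fset K}) (m p r : nat) :
  #|` A| = m -> (p <= m)%N -> (r <= m - p)%N -> (p <= #|` B|)%N ->
  \sum_(A' <- fpowerset A | #|` A'| == p)
      (Rc (A `\` A') B / Rc (A `\` A') A') *: RX r A'
  = \sum_(B' <- fpowerset B | #|` B'| == p)
      (Rc A (B `\` B') / Rc B' (B `\` B')) *: RX r B'.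
Proof.
move=> hm hpm hr hpB.
have RXQ : forall S : {fset K}, RX r S = Qs (@qX K r) S.
  by move=> S; rewrite /RX /Qs /qX exchange_big.
have key := @main K _ (mpolyC r (R:=K)) (@qX K r) (@FX K r) (@FX_eval K r) p A B.
rewrite /Tsum /Usum in key.
have e1 : forall (x : K) S, x *: RX r S = mpolyC r x * Qs (@qX K r) S.
  by move=> x S; rewrite mul_mpolyC RXQ.
under eq_bigr do rewrite e1.
under [RHS]eq_bigr do rewrite e1.
apply: key; rewrite ?hm //.
by rewrite size_FX ltnS.
Qed.
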